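(* Let $\tau$ be a critical GW tree ($\mu=1$) with offspring distribution $p$ satisfying ( * ). Let $(\alpha_n,n\in\mathbb N)$ be a sequence of positive integers such that for every $j\in\mathbb N^*$, \[\lim_{n\to\infty}\frac{\mathbb P(\mathcal G_{n-j}(\tau)=\alpha_n)}{\mathbb P(\mathcal G_n(\tau)=\alpha_n)}=1.\] Then the conditional law of $\tau$ given $\{\mathcal G_n(\tau)=\alpha_n\}$ converges in distribution to the law of Kesten's tree $\tau^*$ as $n\to\infty$.
   Context: Trees (Neveu formalism): $\mathcal U=\bigcup_{n\ge0}(\mathbb N^* )^n$, $|u|$ the length of $u$. A tree is $\mathbf t\subset\mathcal U$ with $\emptyset\in\mathbf t$, closed under taking prefixes, and such that for every $u\in\mathbf t$ there is $k_u(\mathbf t)\ge0$ with $ui\in\mathbf t\iff1\le i\le k_u(\mathbf t)$. $\mathcal G_n(\mathbf t)=\mathrm{Card}\{u\in\mathbf t:|u|=n\}$ is the size of generation $n$. $r_h(\mathbf t)=\{u\in\mathbf t:|u|\le h\}$; convergence in distribution of random trees $T_n\to T$ means $\mathbb P(r_h(T_n)=\mathbf t)\to\mathbb P(r_h(T)=\mathbf t)$ for all $h$ and $\mathbf t$. Offspring distribution: a probability $p$ on $\mathbb N$ satisfying ( * ): $p(0)>0$, $p(0)+p(1)<1$, $\mu=\sum_n np(n)<\infty$. A GW tree $\tau$ with offspring distribution $p$ satisfies $\mathbb P(r_h(\tau)=\mathbf t)=\prod_{u\in r_{h-1}(\mathbf t)}p(k_u(\mathbf t))$ for all $h\ge1$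 and trees $\mathbf t$ of height $\le h$. Kesten's tree $\tau^*$ (for $\mu\le1$): with $p^*(n)=np(n)/\mu$, $\tau^*$ is a random tree with a random sequence $(V_k)_{k\ge1}$, $V_1\cdots V_h\in\tau^*$ for all $h$, constructed recursively: given $(V_1,\dots,V_h)$ and $r_h(\tau^* )$, the numbers of children of the vertices $v$ with $|v|=h$ are independent, with law $p$ if $v\ne V_1\cdots V_h$ and $p^*$ if $v=V_1\cdots V_h$; then $V_{h+1}$ is uniform on $\{1,\dots,k_{V_1\cdots V_h}(\tau^* )\}$. *)

(* Defs.v *)
From Stdlib Require Import Reals Lra Lia List Bool Arith ClassicalEpsilon.
Import ListNotations.
Open Scope R_scope.

(* Finite ordered rooted trees (plane trees).  A finite Neveu tree is encoded
   as the ordered list of its root's subtrees: vertex u = u1...un corresponds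
   to following the u1-th, ..., un-th child. *)
Inductive tree : Type := Node : list tree -> tree.

Definition leaf : tree := Node [].

Definition Rsum (l : list R) : R := fold_right Rplus 0 l.
Definition Rprod (l : list R) : R := fold_right Rmult 1 l.

Fixpoint tree_eqb (s t : tree) : bool :=
  match s, t with
  | Node ls, Node lt =>
      (fix aux (a b : list tree) : bool :=
         match a, b with
         | [], [] => true
         | x :: a', y :: b' => tree_eqb x y && aux a' b'
         | _, _ => false
         end) ls lt
  end.

Fixpoint restr (h : nat) (t : tree) : tree :=
  match h, t with
  | O, _ => leaf
  | S h', Node l => Node (map (restr h') l)
  end.

Fixpoint gen (n : nat) (t : tree) : nat :=
  match n, t with
  | O, _ => 1%nat
  | S n', Node l => list_sum (map (gen n') l)
  end.

(* P(r_h(tau) = t) for a GW tree with offspring distribution p: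
   product over u in r_{h-1}(t) of p(k_u(t)), and 0 if t has height > h. *)
Fixpoint gw_prob (p : nat -> R) (h : nat) (t : tree) : R :=
  match h, t with
  | O, Node l => (match l with [] => 1 | _ => 0 end)
  | S h', Node l => p (length l) * Rprod (map (gw_prob p h') l)
  end.

Definition pstar (p : nat -> R) (mu : R) (k : nat) : R := INR k * p k / mu.

(* P(r_h(tau^star) = t) for Kesten's tree, obtained by summing over the position
   of the spine the probability given by the recursive construction: the root
   (on the spine) has k children with prob. p*(k), V_1 = i with prob. 1/k, the
   i-th subtree is again Kesten-like and the other subtrees are independent GW
   trees. *)
Fixpoint kesten_prob (p : nat -> R) (mu : R) (h : nat) (t : tree) : R :=
  match h, t with
  | O, Node l => (match l with [] => 1 | _ => 0 end)
  | S h', Node l =>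
      let k := length l in
      Rsum (map (fun i =>
        pstar p mu k * / INR k
        * kesten_prob p mu h' (nth i l leaf)
        * Rprod (map (fun j => gw_prob p h' (nth j l leaf))
                     (filter (fun j => negb (Nat.eqb j i)) (seq 0 k))))
        (seq 0 k))
  end.

Fixpoint lists_of {A : Type} (k : nat) (L : list A) : list (list A) :=
  match k with
  | O => [[]]
  | S k' => flat_map (fun x => map (cons x) (lists_of k' L)) L
  end.

Fixpoint trees_bd (n M : nat) : list tree :=
  match n with
  | O => [leaf]
  | S n' => flat_map (fun k => map Node (lists_of k (trees_bd n' M))) (seq 0 (S M))
  end.

(* P(r_n(tau) in A) for an event A on trees of height <= n:
   the (countable, nonnegative) sum of P(r_n(tau) = s) over s in A, defined as
   the limit as M -> oo of the sum over trees with degrees bounded by M. *)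
Definition gw_event (p : nat -> R) (n : nat) (A : tree -> bool) : R :=
  epsilon (inhabits 0)
    (fun x => Un_cv (fun M => Rsum (map (gw_prob p n) (filter A (trees_bd n M)))) x).

Definition P_gen (p : nat -> R) (n a : nat) : R :=
  gw_event p n (fun s => Nat.eqb (gen n s) a).

(* P(r_h(tau) = t, G_n(tau) = a), both events determined by r_{max n h}(tau) *)
Definition P_joint (p : nat -> R) (n a h : nat) (t : tree) : R :=
  gw_event p (Nat.max n h) (fun s => tree_eqb (restr h s) t && Nat.eqb (gen n s) a).

(* Main.v *)
Require Import Defs.
From Stdlib Require Import Reals List.
From Stdlib Require Import Lra Lia Bool Arith ClassicalEpsilon Classical.
Import ListNotations.
Open Scope R_scope.

Definition ind (b : bool) : R := if b then 1 else 0.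

Lemma ind_ge0 b : 0 <= ind b. Proof. destruct b; simpl; lra. Qed.
Lemma ind_le1 b : ind b <= 1. Proof. destruct b; simpl; lra. Qed.
Lemma ind_and a b : ind (a && b) = ind a * ind b.
Proof. destruct a, b; simpl; lra. Qed.

Lemma Rsum_app l1 l2 : Rsum (l1 ++ l2) = Rsum l1 + Rsum l2.
Proof. induction l1; simpl; [lra|rewrite IHl1; lra]. Qed.

Lemma Rprod_app l1 l2 : Rprod (l1 ++ l2) = Rprod l1 * Rprod l2.
Proof. induction l1; simpl; [lra|rewrite IHl1; lra]. Qed.

Lemma Rsum_map_plus {A} (f g : A -> R) l :
  Rsum (map (fun x => f x + g x) l) = Rsum (map f l) + Rsum (map g l).
Proof. induction l; simpl; [lra|rewrite IHl; lra]. Qed.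

Lemma Rsum_map_scal {A} (c : R) (f : A -> R) l :
  Rsum (map (fun x => c * f x) l) = c * Rsum (map f l).
Proof. induction l; simpl; [lra|rewrite IHl; lra]. Qed.

Lemma Rsum_map_ext {A} (f g : A -> R) l :
  (forall x, In x l -> f x = g x) -> Rsum (map f l) = Rsum (map g l).
Proof. induction l; simpl; intros H; [lra|]. rewrite H, IHl; auto. Qed.

Lemma Rsum_map_le {A} (f g : A -> R) l :
  (forall x, In x l -> f x <= g x) -> Rsum (map f l) <= Rsum (map g l).
Proof. induction l; simpl; intros H; [lra|]. apply Rplus_le_compat; auto. Qed.

Lemma Rsum_map_ge0 {A} (f : A -> R) l :
  (forall x, In x l -> 0 <= f x) -> 0 <= Rsum (map f l).
Proof. induction l; simpl; intros H; [lra|]. apply Rplus_le_le_0_compat; auto. Qed.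

Lemma Rprod_map_ge0 {A} (f : A -> R) l :
  (forall x, In x l -> 0 <= f x) -> 0 <= Rprod (map f l).
Proof. induction l; simpl; intros H; [lra|]. apply Rmult_le_pos; auto. Qed.

Lemma Rsum_map_0 {A} (f : A -> R) l :
  (forall x, In x l -> f x = 0) -> Rsum (map f l) = 0.
Proof. induction l; simpl; intros H; [lra|]. rewrite H, IHl; auto; lra. Qed.

Lemma Rsum_ge_term {A} (f : A -> R) l x :
  In x l -> (forall y, In y l -> 0 <= f y) -> f x <= Rsum (map f l).
Proof.
  induction l; simpl; intros Hin H; [contradiction|].
  destruct Hin as [<-|Hin].
  - assert (0 <= Rsum (map f l)) by (apply Rsum_map_ge0; auto). lra.
  - assert (0 <= f a) by auto. specialize (IHl Hin (fun y Hy => H y (or_intror Hy))). lra.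
Qed.

Lemma Rsum_map_map {A B} (f : B -> R) (g : A -> B) l :
  Rsum (map f (map g l)) = Rsum (map (fun x => f (g x)) l).
Proof. rewrite map_map; auto. Qed.

Lemma Rsum_flat_map {A B} (f : B -> R) (g : A -> list B) l :
  Rsum (map f (flat_map g l)) = Rsum (map (fun x => Rsum (map f (g x))) l).
Proof. induction l; simpl; auto. rewrite map_app, Rsum_app, IHl; auto. Qed.

Lemma Rsum_swap {A B} (f : A -> B -> R) l1 l2 :
  Rsum (map (fun x => Rsum (map (fun y => f x y) l2)) l1) =
  Rsum (map (fun y => Rsum (map (fun x => f x y) l1)) l2).
Proof.
  induction l1; simpl.
  - symmetry; apply Rsum_map_0; auto.
  - rewrite IHl1. rewrite <- Rsum_map_plus. auto.
Qed.

Lemma Rsum_filter {A} (f : A -> R) (P : A -> bool) l :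
  Rsum (map f (filter P l)) = Rsum (map (fun x => ind (P x) * f x) l).
Proof. induction l; simpl; auto. destruct (P a); simpl; rewrite IHl; lra. Qed.

Lemma Rsum_const_len {A} (c : R) (l : list A) : Rsum (map (fun _ => c) l) = INR (length l) * c.
Proof. induction l; simpl length; [simpl; lra|]. rewrite S_INR. simpl. rewrite IHl. lra. Qed.

Lemma Rsum_seq_sum_f (f : nat -> R) K : Rsum (map f (seq 0 (S K))) = sum_f_R0 f K.
Proof.
  induction K. simpl; lra.
  rewrite seq_S, map_app, Rsum_app, IHK. simpl. lra.
Qed.

Lemma Rsum_seq_mono (f : nat -> R) K M : (K <= M)%nat -> (forall k, 0 <= f k) ->
  Rsum (map f (seq 0 (S K))) <= Rsum (map f (seq 0 (S M))).
Proof.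
  intros HKM Hf. replace (S M) with (S K + (M - K))%nat by lia.
  rewrite seq_app, map_app, Rsum_app.
  assert (0 <= Rsum (map f (seq (0 + S K) (M - K)))) by (apply Rsum_map_ge0; auto). lra.
Qed.

Lemma Rsum_seq_single (f : nat -> R) N i : (i < N)%nat -> (forall j, j <> i -> f j = 0) ->
  Rsum (map f (seq 0 N)) = f i.
Proof.
  intros Hi H. replace N with (i + 1 + (N - i - 1))%nat by lia.
  rewrite !seq_app, !map_app, !Rsum_app.
  rewrite (Rsum_map_0 f (seq 0 i)), (Rsum_map_0 f (seq (0 + i + 1) _)).
  simpl. lra.
  - intros x Hx. apply in_seq in Hx. apply H. lia.
  - intros x Hx. apply in_seq in Hx. apply H. lia.
Qed.

Lemma Rsum_seq_ind_le1 a N c : Rsum (map (fun k => ind (Nat.eqb k c)) (seq a N)) <= 1.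
Proof.
  destruct (le_lt_dec a c); [destruct (lt_dec c (a+N))|].
  - replace N with ((c - a) + 1 + (N - (c-a) - 1))%nat by lia.
    rewrite !seq_app, !map_app, !Rsum_app.
    replace (a + (c - a))%nat with c by lia.
    rewrite (Rsum_map_0 _ (seq a _)), (Rsum_map_0 _ (seq (a + _) _)).
    simpl. rewrite Nat.eqb_refl. simpl. lra.
    + intros x Hx. apply in_seq in Hx. destruct (Nat.eqb_spec x c); [lia|reflexivity].
    + intros x Hx. apply in_seq in Hx. destruct (Nat.eqb_spec x c); [lia|reflexivity].
  - rewrite Rsum_map_0; [lra|]. intros x Hx. apply in_seq in Hx. destruct (Nat.eqb_spec x c); [lia|reflexivity].
  - rewrite Rsum_map_0; [lra|]. intros x Hx. apply in_seq in Hx. destruct (Nat.eqb_spec x c); [lia|reflexivity].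
Qed.

Lemma sum_lists_0 {A} (G : list A -> R) L : Rsum (map G (lists_of 0 L)) = G [].
Proof. simpl. lra. Qed.

Lemma sum_lists_S {A} (G : list A -> R) k L :
  Rsum (map G (lists_of (S k) L)) =
  Rsum (map (fun x => Rsum (map (fun l => G (x :: l)) (lists_of k L))) L).
Proof. simpl. rewrite Rsum_flat_map. apply Rsum_map_ext. intros. rewrite map_map. auto. Qed.

Lemma In_lists_of {A} k (L : list A) l :
  In l (lists_of k L) <-> length l = k /\ forall x, In x l -> In x L.
Proof.
  revert l; induction k; intros l; simpl.
  - split. intros [<-|[]]. split; auto. intros x []. intros [H _]. destruct l; [auto|discriminate].
  - rewrite in_flat_map. split.
    + intros [x [Hx Hl]]. apply in_map_iff in Hl. destruct Hl as [l' [<- Hl']].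
      apply IHk in Hl'. destruct Hl' as [Hlen Hin]. simpl. split; [lia|]. intros y [<-|Hy]; auto.
    + intros [Hlen Hin]. destruct l as [|x l']; [discriminate|]. exists x. split; [apply Hin; simpl; auto|].
      apply in_map. apply IHk. split; [simpl in Hlen; lia|]. intros y Hy; apply Hin; simpl; auto.
Qed.

Lemma sum_lists_app {A} a b (L : list A) G :
  Rsum (map G (lists_of (a + b) L)) =
  Rsum (map (fun l1 => Rsum (map (fun l2 => G (l1 ++ l2)) (lists_of b L))) (lists_of a L)).
Proof.
  revert G; induction a; intros G.
  - simpl. rewrite Rplus_0_r. reflexivity.
  - simpl plus. rewrite !sum_lists_S. apply Rsum_map_ext. intros x _.
    rewrite (IHa (fun l => G (x :: l))). auto.
Qed.

Lemma sum_lists_prod {A} (f : A -> R) k L :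
  Rsum (map (fun l => Rprod (map f l)) (lists_of k L)) = (Rsum (map f L)) ^ k.
Proof.
  induction k.
  - simpl. lra.
  - rewrite sum_lists_S. simpl pow.
    rewrite (Rsum_map_ext _ (fun x => f x * (Rsum (map f L))^k)).
    + rewrite Rmult_comm. rewrite <- Rsum_map_scal. apply Rsum_map_ext. intros; lra.
    + intros x _. simpl. rewrite Rsum_map_scal, IHk. auto.
Qed.

Lemma sum_E_S (F : tree -> R) n M :
  Rsum (map F (trees_bd (S n) M)) =
  Rsum (map (fun k => Rsum (map (fun ls => F (Node ls)) (lists_of k (trees_bd n M)))) (seq 0 (S M))).
Proof.
  change (trees_bd (S n) M) with (flat_map (fun k => map Node (lists_of k (trees_bd n M))) (seq 0 (S M))).
  rewrite Rsum_flat_map. apply Rsum_map_ext. intros. rewrite map_map. auto.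
Qed.

Lemma sum_E_0 (F : tree -> R) M : Rsum (map F (trees_bd 0 M)) = F leaf.
Proof. simpl. lra. Qed.

Lemma tree_eqb_cons x a y b :
  tree_eqb (Node (x :: a)) (Node (y :: b)) = tree_eqb x y && tree_eqb (Node a) (Node b).
Proof. reflexivity. Qed.
Lemma tree_eqb_nil_cons y b : tree_eqb (Node []) (Node (y :: b)) = false.
Proof. reflexivity. Qed.
Lemma tree_eqb_cons_nil y b : tree_eqb (Node (y :: b)) (Node []) = false.
Proof. reflexivity. Qed.
Lemma tree_eqb_nil : tree_eqb (Node []) (Node []) = true.
Proof. reflexivity. Qed.

Fixpoint tree_ind' (P : tree -> Prop) (H : forall l, Forall P l -> P (Node l)) (t : tree) : P t :=
  match t with
  | Node l => H l ((fix F (l : list tree) : Forall P l :=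
                      match l with
                      | [] => Forall_nil _
                      | x :: l' => Forall_cons _ (tree_ind' P H x) (F l')
                      end) l)
  end.

Lemma tree_eqb_sound : forall s t, tree_eqb s t = true -> s = t.
Proof.
  intros s. induction s as [ls IH] using tree_ind'.
  induction IH as [|x ls Hx Hls IHls]; intros [lt] H.
  - destruct lt; [auto|discriminate].
  - destruct lt as [|y lt]; [discriminate|]. rewrite tree_eqb_cons in H.
    apply andb_true_iff in H. destruct H as [H1 H2].
    apply Hx in H1. apply IHls in H2. injection H2 as H2. subst. auto.
Qed.

Lemma tree_eqb_refl : forall t, tree_eqb t t = true.
Proof.
  intros t. induction t as [ls IH] using tree_ind'.
  induction IH as [|x ls Hx Hls IHls]; auto.
  rewrite tree_eqb_cons, Hx, IHls. auto.
Qed.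

Lemma In_E_0 t M : In t (trees_bd 0 M) <-> t = leaf.
Proof. simpl. split; [intros [<-|[]]; auto|intros ->; auto]. Qed.

Lemma In_E_S t n M : In t (trees_bd (S n) M) <->
  exists l, t = Node l /\ (length l <= M)%nat /\ forall x, In x l -> In x (trees_bd n M).
Proof.
  change (trees_bd (S n) M) with (flat_map (fun k => map Node (lists_of k (trees_bd n M))) (seq 0 (S M))).
  rewrite in_flat_map. split.
  - intros [k [Hk Ht]]. apply in_seq in Hk. apply in_map_iff in Ht. destruct Ht as [l [<- Hl]].
    apply In_lists_of in Hl. destruct Hl as [Hlen Hin]. exists l. split; auto. split; [lia|auto].
  - intros [l [-> [Hlen Hin]]]. exists (length l). split; [apply in_seq; lia|].
    apply in_map. apply In_lists_of. auto.
Qed.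

Lemma In_E_mono : forall n t M M', In t (trees_bd n M) -> (M <= M')%nat -> In t (trees_bd n M').
Proof.
  induction n; intros t M M' H HM.
  - apply In_E_0 in H. apply In_E_0. auto.
  - apply In_E_S in H. destruct H as [l [-> [Hl Hin]]]. apply In_E_S. exists l. split; auto.
    split; [lia|]. intros x Hx. eauto.
Qed.

Lemma restr_in : forall h n s M, In s (trees_bd n M) -> In (restr h s) (trees_bd h M).
Proof.
  induction h; intros n s M H.
  - simpl. auto.
  - destruct n.
    + apply In_E_0 in H. subst. simpl. apply In_E_S. exists []. simpl. split; auto. split; [lia|]. intros _ [].
    + apply In_E_S in H. destruct H as [l [-> [Hl Hin]]]. simpl. apply In_E_S.
      exists (map (restr h) l). split; auto. rewrite length_map. split; auto.
      intros x Hx. apply in_map_iff in Hx. destruct Hx as [y [<- Hy]]. eauto.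
Qed.

Definition W (p : nat -> R) n l := Rprod (map (gw_prob p n) l).
Definition Gs n l := list_sum (map (gen n) l).

Lemma gw_nonneg p : (forall n, 0 <= p n) -> forall h t, 0 <= gw_prob p h t.
Proof.
  intros Hp h. induction h; intros [l].
  - destruct l; simpl; lra.
  - simpl. apply Rmult_le_pos; auto. apply Rprod_map_ge0. auto.
Qed.

Lemma W_nonneg p : (forall n, 0 <= p n) -> forall h l, 0 <= W p h l.
Proof. intros. apply Rprod_map_ge0. intros; apply gw_nonneg; auto. Qed.

Lemma sum_lists_len {A} k (L : list A) (G : nat -> list A -> R) :
  Rsum (map (fun l => G (length l) l) (lists_of k L)) = Rsum (map (fun l => G k l) (lists_of k L)).
Proof. apply Rsum_map_ext. intros l Hl. apply In_lists_of in Hl. destruct Hl as [-> _]. auto. Qed.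

Definition T p n M := Rsum (map (gw_prob p n) (trees_bd n M)).

Lemma T_0 p M : T p 0 M = 1.
Proof. unfold T. simpl. lra. Qed.

Lemma T_S p n M : T p (S n) M = Rsum (map (fun k => p k * (T p n M) ^ k) (seq 0 (S M))).
Proof.
  unfold T at 1. rewrite sum_E_S. apply Rsum_map_ext. intros k _.
  simpl gw_prob. rewrite (sum_lists_len k _ (fun m l => p m * Rprod (map (gw_prob p n) l))).
  rewrite Rsum_map_scal, sum_lists_prod. auto.
Qed.

Lemma psum_le1 p : (forall n, 0 <= p n) -> infinite_sum p 1 ->
  forall M, Rsum (map p (seq 0 (S M))) <= 1.
Proof.
  intros Hp Hs M. rewrite Rsum_seq_sum_f. apply (growing_ineq (sum_f_R0 p)).
  - intros n. simpl. specialize (Hp (S n)). lra.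
  - exact Hs.
Qed.

Lemma pow_le1 x k : 0 <= x <= 1 -> x ^ k <= 1.
Proof. intros H. induction k; simpl; [lra|]. pose proof (pow_le x k). nra. Qed.

Lemma T_bounds p : (forall n, 0 <= p n) -> infinite_sum p 1 ->
  forall n M, 0 <= T p n M <= 1.
Proof.
  intros Hp Hs n M. induction n.
  - rewrite T_0. lra.
  - rewrite T_S. split.
    + apply Rsum_map_ge0. intros. apply Rmult_le_pos; auto. apply pow_le. lra.
    + apply Rle_trans with (Rsum (map p (seq 0 (S M)))); [|apply psum_le1; auto].
      apply Rsum_map_le. intros k _. rewrite <- (Rmult_1_r (p k)) at 2.
      apply Rmult_le_compat_l; auto. apply pow_le1; lra. 
Qed.

Inductive subl {A : Type} : list A -> list A -> Prop :=
| subl_nil : subl [] []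
| subl_skip x l1 l2 : subl l1 l2 -> subl l1 (x :: l2)
| subl_keep x l1 l2 : subl l1 l2 -> subl (x :: l1) (x :: l2).

Lemma subl_refl {A} (l : list A) : subl l l.
Proof. induction l; [apply subl_nil|apply subl_keep; auto]. Qed.

Lemma subl_nil_l {A} (l : list A) : subl [] l.
Proof. induction l; [apply subl_nil|apply subl_skip; auto]. Qed.

Lemma subl_app {A} (a b c d : list A) : subl a b -> subl c d -> subl (a ++ c) (b ++ d).
Proof. intros H1 H2. induction H1; simpl; auto; [apply subl_skip|apply subl_keep]; auto. Qed.

Lemma subl_map {A B} (f : A -> B) l1 l2 : subl l1 l2 -> subl (map f l1) (map f l2).
Proof. intros H; induction H; simpl; [apply subl_nil|apply subl_skip|apply subl_keep]; auto. Qed.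

Lemma subl_flat_map {A B} (f g : A -> list B) l1 l2 :
  subl l1 l2 -> (forall x, subl (f x) (g x)) -> subl (flat_map f l1) (flat_map g l2).
Proof.
  intros H Hfg. induction H; simpl.
  - constructor.
  - rewrite <- (app_nil_l (flat_map f l1)). apply subl_app; auto. apply subl_nil_l.
  - apply subl_app; auto.
Qed.

Lemma subl_lists_of {A} k (L1 L2 : list A) : subl L1 L2 -> subl (lists_of k L1) (lists_of k L2).
Proof.
  intros H. induction k; simpl. apply subl_refl.
  apply subl_flat_map; auto. intros x. apply subl_map. auto.
Qed.

Lemma subl_E n M : subl (trees_bd n M) (trees_bd n (S M)).
Proof.
  induction n. apply subl_refl.
  change (subl (flat_map (fun k => map Node (lists_of k (trees_bd n M))) (seq 0 (S M)))
               (flat_map (fun k => map Node (lists_of k (trees_bd n (S M)))) (seq 0 (S (S M))))).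
  rewrite (seq_S (S M)), flat_map_app. rewrite <- (app_nil_r (flat_map _ (seq 0 (S M)))).
  apply subl_app; [|apply subl_nil_l].
  apply subl_flat_map. apply subl_refl. intros k. apply subl_map. apply subl_lists_of. auto.
Qed.

Lemma sum_subl {A} (f : A -> R) l1 l2 : subl l1 l2 -> (forall x, 0 <= f x) ->
  Rsum (map f l1) <= Rsum (map f l2).
Proof. intros H Hf. induction H; simpl; try lra. specialize (Hf x). lra. Qed.

Lemma cv_const c : Un_cv (fun _ => c) c.
Proof. intros e He. exists 0%nat. intros. unfold R_dist. rewrite Rminus_diag, Rabs_R0. auto. Qed.

Lemma gw_event_cv p : (forall n, 0 <= p n) -> infinite_sum p 1 ->
  forall n A, Un_cv (fun M => Rsum (map (gw_prob p n) (filter A (trees_bd n M)))) (gw_event p n A).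
Proof.
  intros Hp Hs n A.
  assert (Hg : Un_growing (fun M => Rsum (map (gw_prob p n) (filter A (trees_bd n M))))).
  { intros M. rewrite !Rsum_filter. apply sum_subl. apply subl_E.
    intros. apply Rmult_le_pos. apply ind_ge0. apply gw_nonneg; auto. }
  assert (Hb : has_ub (fun M => Rsum (map (gw_prob p n) (filter A (trees_bd n M))))).
  { exists 1. intros x [M ->]. rewrite Rsum_filter.
    apply Rle_trans with (T p n M); [|apply T_bounds; auto]. unfold T.
    apply Rsum_map_le. intros s _. pose proof (gw_nonneg p Hp n s). pose proof (ind_le1 (A s)).
    pose proof (ind_ge0 (A s)). nra. }
  destruct (growing_cv _ Hg Hb) as [l Hl].
  unfold gw_event. apply epsilon_spec. exists l. auto.
Qed.

Lemma gw_event_bounds p : (forall n, 0 <= p n) -> infinite_sum p 1 ->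
  forall n A, 0 <= gw_event p n A <= 1.
Proof.
  intros Hp Hs n A. pose proof (gw_event_cv p Hp Hs n A) as H. split.
  - eapply Rle_cv_lim; [|apply cv_const|exact H].
    intros M. simpl. apply Rsum_map_ge0. intros; apply gw_nonneg; auto.
  - eapply Rle_cv_lim; [|exact H|apply cv_const].
    intros M. simpl. rewrite Rsum_filter.
    apply Rle_trans with (T p n M); [|apply T_bounds; auto]. unfold T.
    apply Rsum_map_le. intros s _. pose proof (gw_nonneg p Hp n s). pose proof (ind_le1 (A s)).
    pose proof (ind_ge0 (A s)). nra.
Qed.

Lemma Rsum_map_scal_r {A} (c : R) (f : A -> R) l :
  Rsum (map (fun x => f x * c) l) = Rsum (map f l) * c.
Proof. induction l; simpl; [lra|rewrite IHl; lra]. Qed.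

Lemma map_nth_seq_f {A} (f : A -> R) l d :
  map (fun i => f (nth i l d)) (seq 0 (length l)) = map f l.
Proof.
  induction l; auto. simpl length. change (seq 0 (S (length l))) with (0%nat :: seq 1 (length l)).
  rewrite <- seq_shift. simpl. rewrite map_map. simpl. rewrite IHl. auto.
Qed.

Lemma filter_all {A} (f : A -> bool) l : (forall x, In x l -> f x = true) -> filter f l = l.
Proof. induction l; simpl; intros H; auto. rewrite H; auto. rewrite IHl; auto. Qed.

Lemma prod_remove (g : nat -> R) n i : (i < n)%nat ->
  Rprod (map g (seq 0 n)) = g i * Rprod (map g (filter (fun j => negb (Nat.eqb j i)) (seq 0 n))).
Proof.
  induction n; intros Hi; [lia|].
  rewrite seq_S, filter_app, !map_app, !Rprod_app. simpl filter.
  destruct (Nat.eqb_spec n i).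
  - subst. simpl. rewrite filter_all.
    + lra.
    + intros x Hx. apply in_seq in Hx. destruct (Nat.eqb_spec x i); [lia|auto].
  - simpl. rewrite IHn by lia. lra.
Qed.

Lemma INR_list_sum {A} (g : A -> nat) l : INR (list_sum (map g l)) = Rsum (map (fun x => INR (g x)) l).
Proof. induction l; simpl; auto. rewrite plus_INR, IHl. auto. Qed.

Lemma kesten_gw p : forall h t, kesten_prob p 1 h t = INR (gen h t) * gw_prob p h t.
Proof.
  induction h; intros [l].
  - destruct l; simpl; lra.
  - simpl kesten_prob. simpl gen. simpl gw_prob.
    rewrite (Rsum_map_ext _ (fun i => (p (length l) * Rprod (map (gw_prob p h) l)) * INR (gen h (nth i l leaf)))).
    + rewrite Rsum_map_scal. rewrite (map_nth_seq_f (fun x => INR (gen h x))).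
      rewrite INR_list_sum. lra.
    + intros i Hi. apply in_seq in Hi. rewrite IHh. unfold pstar.
      rewrite <- (map_nth_seq_f (gw_prob p h) l leaf).
      rewrite (prod_remove (fun j => gw_prob p h (nth j l leaf)) (length l) i) by lia.
      assert (INR (length l) <> 0) by (apply not_0_INR; lia).
      field. auto.
Qed.

Definition mm p h M := Rsum (map (fun t => INR (gen h t) * gw_prob p h t) (trees_bd h M)).

Lemma mm_0 p M : mm p 0 M = 1.
Proof. unfold mm. simpl. lra. Qed.

Lemma sum_lists_lin {A} (g f : A -> R) k L :
  Rsum (map (fun l => Rsum (map g l) * Rprod (map f l)) (lists_of k L)) =
  INR k * Rsum (map (fun x => g x * f x) L) * (Rsum (map f L)) ^ (pred k).
Proof.
  induction k.
  - simpl. lra.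
  - rewrite sum_lists_S.
    rewrite (Rsum_map_ext _ (fun x => g x * f x * (Rsum (map f L)) ^ k +
                  f x * (INR k * Rsum (map (fun x => g x * f x) L) * (Rsum (map f L)) ^ (pred k)))).
    + rewrite Rsum_map_plus, Rsum_map_scal_r, Rsum_map_scal_r.
      destruct k.
      * simpl. lra.
      * simpl pred. simpl pow. rewrite (S_INR (S k)). set (P := Rsum (map f L) ^ k). ring.
    + intros x _.
      rewrite (Rsum_map_ext _ (fun l => (g x * f x) * Rprod (map f l) + f x * (Rsum (map g l) * Rprod (map f l))))
        by (intros; simpl; ring).
      rewrite Rsum_map_plus, !Rsum_map_scal, sum_lists_prod, IHk. ring.
Qed.

Lemma mm_S p h M : mm p (S h) M =
  Rsum (map (fun k => p k * INR k * mm p h M * (T p h M) ^ (pred k)) (seq 0 (S M))).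
Proof.
  unfold mm at 1. rewrite sum_E_S. apply Rsum_map_ext. intros k _.
  simpl gen. simpl gw_prob.
  rewrite (sum_lists_len k _ (fun m ls => INR (list_sum (map (gen h) ls)) * (p m * Rprod (map (gw_prob p h) ls)))).
  rewrite (Rsum_map_ext _ (fun ls => p k * (Rsum (map (fun x => INR (gen h x)) ls) * Rprod (map (gw_prob p h) ls)))).
  - rewrite Rsum_map_scal, sum_lists_lin. unfold mm, T. ring.
  - intros. rewrite INR_list_sum. ring.
Qed.

Lemma psum_ev f : infinite_sum f 1 -> forall e, 0 < e -> exists K, forall K', (K <= K')%nat ->
  1 - e <= Rsum (map f (seq 0 (S K'))).
Proof.
  intros H e He. destruct (H e He) as [K HK]. exists K. intros K' HK'.
  specialize (HK K' HK'). rewrite Rsum_seq_sum_f. unfold R_dist in HK.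
  apply Rabs_def2 in HK. lra.
Qed.

Lemma bern y k : 0 <= y -> 1 + INR k * (y - 1) <= y ^ k.
Proof.
  intros Hy. induction k.
  - simpl. lra.
  - rewrite S_INR. simpl pow. pose proof (pos_INR k).
    assert (y * (1 + INR k * (y - 1)) <= y * y ^ k) by (apply Rmult_le_compat_l; lra).
    assert (0 <= INR k * ((y - 1) * (y - 1))) by (apply Rmult_le_pos; [lra|pose proof (Rle_0_sqr (y-1)); unfold Rsqr in *; lra]).
    nra.
Qed.

Definition ev_ge (u : nat -> R) (c : R) := forall e, 0 < e -> exists N, forall M, (N <= M)%nat -> c - e <= u M.

Lemma ev_ge_small u c : (forall e, 0 < e <= 1 -> exists N, forall M, (N <= M)%nat -> c - e <= u M) -> ev_ge u c.
Proof.
  intros H e He. destruct (Rle_dec e 1).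
  - apply H. lra.
  - destruct (H 1) as [N HN]; [lra|]. exists N. intros M HM. specialize (HN M HM). lra.
Qed.

Lemma T_ev p : (forall n, 0 <= p n) -> infinite_sum p 1 -> infinite_sum (fun n => INR n * p n) 1 ->
  forall h, ev_ge (T p h) 1.
Proof.
  intros Hp Hs Hc h. induction h.
  - intros e He. exists 0%nat. intros. rewrite T_0. lra.
  - intros e He. destruct (psum_ev p Hs (e/2)) as [K HK]; [lra|].
    destruct (IHh (e/2)) as [N HN]; [lra|].
    exists (max N K). intros M HM.
    rewrite T_S. specialize (HN M ltac:(lia)). pose proof (T_bounds p Hp Hs h M) as HT.
    set (y := T p h M) in *.
    eapply Rle_trans; [|apply Rsum_seq_mono with (K := K); [lia|]].
    2:{ intros k. apply Rmult_le_pos; auto. apply pow_le. lra. }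
    eapply Rle_trans; [|apply Rsum_map_le with (f := fun k => p k + (y - 1) * (INR k * p k))].
    2:{ intros k _. pose proof (bern y k ltac:(lra)). pose proof (Hp k). nra. }
    rewrite Rsum_map_plus, Rsum_map_scal.
    specialize (HK K (le_n _)).
    pose proof (psum_le1 _ (fun n => Rmult_le_pos _ _ (pos_INR n) (Hp n)) Hc K) as Hm.
    assert (0 <= Rsum (map (fun k => INR k * p k) (seq 0 (S K)))).
    { apply Rsum_map_ge0. intros. apply Rmult_le_pos; auto. apply pos_INR. }
    nra.
Qed.

Lemma mm_ev p : (forall n, 0 <= p n) -> infinite_sum p 1 -> infinite_sum (fun n => INR n * p n) 1 ->
  forall h, ev_ge (mm p h) 1.
Proof.
  intros Hp Hs Hc h. induction h.
  - intros e He. exists 0%nat. intros. rewrite mm_0. lra.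
  - apply ev_ge_small. intros e He.
    destruct (psum_ev _ Hc (e/2)) as [K HK]; [lra|].
    specialize (HK K (le_n _)).
    pose proof (pos_INR K) as HK0.
    set (d := e / (2 * (INR K + 1))).
    assert (Hd : 0 < d) by (unfold d; apply Rdiv_lt_0_compat; lra).
    assert (HdK : INR K * d <= e / 2).
    { unfold d. apply (Rmult_le_reg_r (2 * (INR K + 1))); [lra|].
      field_simplify; [|lra]. nra. }
    assert (Hd2 : d <= 1/2).
    { unfold d. apply (Rmult_le_reg_r (2 * (INR K + 1))); [lra|].
      field_simplify; [|lra]. nra. }
    destruct (IHh d Hd) as [N1 HN1]. destruct (T_ev p Hp Hs Hc h d Hd) as [N2 HN2].
    exists (max (max N1 N2) K). intros M HM.
    specialize (HN1 M ltac:(lia)). specialize (HN2 M ltac:(lia)).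
    pose proof (T_bounds p Hp Hs h M) as HT.
    rewrite mm_S.
    set (y := T p h M) in *. set (z := mm p h M) in *.
    eapply Rle_trans; [|apply Rsum_seq_mono with (K := K); [lia|]].
    2:{ intros k. apply Rmult_le_pos; [|apply pow_le; lra]. apply Rmult_le_pos; [|lra].
        apply Rmult_le_pos; auto. apply pos_INR. }
    eapply Rle_trans; [|apply Rsum_map_le with (f := fun k => (1 - INR K * d) * (INR k * p k))].
    2:{ intros k Hk. apply in_seq in Hk. destruct k.
        - simpl. lra.
        - simpl pred. pose proof (bern (1 - d) (S k) ltac:(lra)).
          assert (Hpow : (1 - d) ^ k <= y ^ k) by (apply pow_incr; lra).
          assert (0 <= (1-d)^k) by (apply pow_le; lra).
          assert (INR (S k) <= INR K) by (apply le_INR; lia).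
          simpl pow in H.
          assert ((1 - d) * (1 - d) ^ k <= z * y ^ k) by nra.
          pose proof (Hp (S k)). pose proof (pos_INR (S k)).
          assert (Hzz : 1 - INR K * d <= z * y ^ k) by nra.
          assert (0 <= INR (S k) * p (S k)) by (apply Rmult_le_pos; lra).
          apply Rle_trans with ((z * y ^ k) * (INR (S k) * p (S k))).
          + apply Rmult_le_compat_r; lra.
          + lra. }
    rewrite Rsum_map_scal.
    pose proof (psum_le1 _ (fun n => Rmult_le_pos _ _ (pos_INR n) (Hp n)) Hc K) as Hm.
    nra.
Qed.

Lemma count_lists L lu : (forall y, Rsum (map (fun x => ind (tree_eqb y x)) L) <= 1) ->
  forall k, Rsum (map (fun ls => ind (tree_eqb (Node lu) (Node ls))) (lists_of k L)) <= ind (Nat.eqb k (length lu)).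
Proof.
  intros HL. induction lu as [|y lu IH]; intros k.
  - destruct k.
    + simpl. lra.
    + rewrite sum_lists_S. simpl (ind (_ =? _)). rewrite Rsum_map_0; [lra|]. intros x _.
      apply Rsum_map_0. intros. rewrite tree_eqb_nil_cons. auto.
  - destruct k.
    + simpl. lra.
    + rewrite sum_lists_S. simpl length. simpl (Nat.eqb (S k) (S _)).
      eapply Rle_trans.
      * apply Rsum_map_le with (g := fun x => ind (tree_eqb y x) * ind (Nat.eqb k (length lu))).
        intros x _. rewrite (Rsum_map_ext _ (fun l => ind (tree_eqb y x) * ind (tree_eqb (Node lu) (Node l)))).
        -- rewrite Rsum_map_scal. apply Rmult_le_compat_l; [apply ind_ge0|apply IH].
        -- intros. rewrite tree_eqb_cons, ind_and. auto.
      * rewrite Rsum_map_scal_r. specialize (HL y). pose proof (ind_ge0 (Nat.eqb k (length lu))). nra.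
Qed.

Lemma count_E h M : forall u, Rsum (map (fun t => ind (tree_eqb u t)) (trees_bd h M)) <= 1.
Proof.
  induction h; intros u.
  - simpl. pose proof (ind_le1 (tree_eqb u leaf)). lra.
  - rewrite sum_E_S. destruct u as [lu].
    eapply Rle_trans; [|apply (Rsum_seq_ind_le1 0 (S M) (length lu))].
    apply Rsum_map_le. intros k _. apply count_lists. auto.
Qed.

Fixpoint mtch h (ss ts : list tree) : bool :=
  match ss, ts with
  | [], [] => true
  | s :: ss', t :: ts' => tree_eqb (restr h s) t && mtch h ss' ts'
  | _, _ => false
  end.

Definition children (t : tree) : list tree := match t with Node l => l end.

Lemma eqb_node_map h : forall ls c, tree_eqb (Node (map (restr h) ls)) (Node c) = mtch h ls c.
Proof.
  induction ls; intros [|y c]; simpl map; auto.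
  rewrite tree_eqb_cons, IHls. auto.
Qed.

Lemma mtch_len h : forall ss ts, mtch h ss ts = true -> length ss = length ts.
Proof.
  induction ss; intros [|t ts]; simpl; auto; try discriminate.
  intros H. apply andb_true_iff in H. destruct H. f_equal. auto.
Qed.

Lemma mtch_app h : forall l1 c1 l2 c2, length l1 = length c1 ->
  mtch h (l1 ++ l2) (c1 ++ c2) = mtch h l1 c1 && mtch h l2 c2.
Proof.
  induction l1; intros [|y c1] l2 c2 H; simpl in *; try discriminate; auto.
  rewrite IHl1 by lia. apply andb_assoc.
Qed.

Lemma W_app p n l1 l2 : W p n (l1 ++ l2) = W p n l1 * W p n l2.
Proof. unfold W. rewrite map_app, Rprod_app. auto. Qed.

Lemma W_cons p n x l : W p n (x :: l) = gw_prob p n x * W p n l.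
Proof. reflexivity. Qed.

Lemma Gs_S n : forall ss, Gs (S n) ss = Gs n (concat (map children ss)).
Proof.
  unfold Gs. induction ss; auto. simpl concat. rewrite map_app, list_sum_app, <- IHss.
  destruct a. reflexivity.
Qed.

Lemma W_S p h : forall ts, W p (S h) ts =
  Rprod (map (fun t => p (length (children t))) ts) * W p h (concat (map children ts)).
Proof.
  induction ts; simpl. unfold W; simpl; lra.
  rewrite W_cons, IHts, W_app. destruct a as [l]. simpl. unfold W. ring.
Qed.

Lemma step p h n M : forall ts (Psi : list tree -> R),
  (forall t, In t ts -> In t (trees_bd (S h) M)) ->
  Rsum (map (fun ss => ind (mtch (S h) ss ts) * Psi (concat (map children ss)) * W p (S n) ss)
            (lists_of (length ts) (trees_bd (S n) M)))
  = Rprod (map (fun t => p (length (children t))) ts) *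
    Rsum (map (fun cs => ind (mtch h cs (concat (map children ts))) * Psi cs * W p n cs)
            (lists_of (length (concat (map children ts))) (trees_bd n M))).
Proof.
  induction ts as [|[c] ts IH]; intros Psi Hin.
  - simpl. unfold W. simpl. lra.
  - assert (Hc : In (Node c) (trees_bd (S h) M)) by (apply Hin; simpl; auto).
    apply In_E_S in Hc. destruct Hc as [l [Hl [Hlen Hcin]]]. injection Hl as <-.
    simpl length. rewrite sum_lists_S.
    rewrite (Rsum_map_ext _ (fun s => ind (tree_eqb (restr (S h) s) (Node c)) * gw_prob p (S n) s *
       (Rprod (map (fun t => p (length (children t))) ts) *
        Rsum (map (fun cs => ind (mtch h cs (concat (map children ts))) * Psi (children s ++ cs) * W p n cs)
            (lists_of (length (concat (map children ts))) (trees_bd n M)))))).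
    2:{ intros s _. rewrite <- (IH (fun cs => Psi (children s ++ cs))) by (intros; apply Hin; simpl; auto).
        rewrite <- Rsum_map_scal. apply Rsum_map_ext. intros ss _.
        change (mtch (S h) (s::ss) (Node c :: ts)) with (tree_eqb (restr (S h) s) (Node c) && mtch (S h) ss ts).
        simpl concat. rewrite ind_and, W_cons. ring. }
    rewrite sum_E_S.
    rewrite (Rsum_seq_single _ (S M) (length c)); [|lia|].
    2:{ intros j Hj. apply Rsum_map_0. intros ls Hls. apply In_lists_of in Hls. destruct Hls as [Hls _].
        simpl restr. rewrite eqb_node_map.
        destruct (mtch h ls c) eqn:E. apply mtch_len in E. lia. simpl. lra. }
    change (concat (map children (Node c :: ts))) with (c ++ concat (map children ts)).
    rewrite length_app, sum_lists_app.
    change (Rprod (map (fun t => p (length (children t))) (Node c :: ts))) with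
      (p (length c) * Rprod (map (fun t => p (length (children t))) ts)).
    rewrite <- Rsum_map_scal.
    apply Rsum_map_ext. intros ls Hls. apply In_lists_of in Hls. destruct Hls as [Hls _].
    rewrite (Rsum_map_ext (fun l2 => ind (mtch h (ls ++ l2) (c ++ concat (map children ts))) * Psi (ls ++ l2) * W p n (ls ++ l2)) (fun l2 => ind (mtch h ls c) * W p n ls *
         (ind (mtch h l2 (concat (map children ts))) * Psi (ls ++ l2) * W p n l2))).
    2:{ intros l2 _. rewrite mtch_app by auto. rewrite ind_and, W_app. ring. }
    rewrite Rsum_map_scal.
    change (restr (S h) (Node ls)) with (Node (map (restr h) ls)).
    rewrite eqb_node_map. change (gw_prob p (S n) (Node ls)) with (p (length ls) * W p n ls).
    change (children (Node ls)) with ls.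
    rewrite Hls. ring.
Qed.

Lemma W_leaves p : forall ts, (forall t, In t ts -> t = leaf) -> W p 0 ts = 1.
Proof.
  induction ts; intros H. reflexivity.
  rewrite W_cons, IHts. rewrite (H a) by (simpl; auto). simpl. lra. intros; apply H; simpl; auto.
Qed.

Lemma Gs_0 : forall ts, Gs 0 ts = length ts.
Proof. unfold Gs. induction ts as [|[] ts IH]; auto. simpl in *. rewrite IH. auto. Qed.

Lemma mtch_leaves : forall ss ts, length ss = length ts -> (forall t, In t ts -> t = leaf) -> mtch 0 ss ts = true.
Proof.
  induction ss; intros [|t ts] Hl H; simpl in *; try discriminate; auto.
  rewrite (H t) by auto. rewrite IHss; auto.
Qed.

Lemma graft p h : forall n M ts (phi : nat -> R), (h <= n)%nat ->
  (forall t, In t ts -> In t (trees_bd h M)) ->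
  Rsum (map (fun ss => ind (mtch h ss ts) * phi (Gs n ss) * W p n ss) (lists_of (length ts) (trees_bd n M)))
  = W p h ts * Rsum (map (fun us => phi (Gs (n - h) us) * W p (n - h) us) (lists_of (Gs h ts) (trees_bd (n - h) M))).
Proof.
  induction h; intros n M ts phi Hhn Hin.
  - assert (Hl : forall t, In t ts -> t = leaf) by (intros t Ht; apply (In_E_0 t M); auto).
    rewrite W_leaves, Gs_0 by auto. rewrite Nat.sub_0_r, Rmult_1_l.
    apply Rsum_map_ext. intros ss Hss. apply In_lists_of in Hss. destruct Hss as [Hss _].
    rewrite mtch_leaves by auto. simpl. ring.
  - destruct n as [|n]; [lia|].
    rewrite (Rsum_map_ext _ (fun ss => ind (mtch (S h) ss ts) * (fun cs => phi (Gs n cs)) (concat (map children ss)) * W p (S n) ss)).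
    2:{ intros. rewrite Gs_S. auto. }
    etransitivity; [apply (step p h n M ts (fun cs => phi (Gs n cs))); auto|].
    rewrite IHh by (try lia; intros t Ht; apply in_concat in Ht; destruct Ht as [l [Hl Ht]];
                    apply in_map_iff in Hl; destruct Hl as [[c] [<- Hc]];
                    apply Hin in Hc; apply In_E_S in Hc; destruct Hc as [l' [E [_ H']]];
                    injection E as <-; auto).
    rewrite W_S, Gs_S. simpl minus. ring.
Qed.

Lemma Z_prod p m : forall us, ind (Nat.eqb (Gs m us) 0) * W p m us =
  Rprod (map (fun x => ind (Nat.eqb (gen m x) 0) * gw_prob p m x) us).
Proof.
  induction us. simpl. unfold W. simpl. lra.
  simpl. rewrite <- IHus. unfold W, Gs. simpl.
  destruct (gen m a); simpl; [|lra]. ring.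
Qed.

Lemma Z_pow p m k L : Rsum (map (fun us => ind (Nat.eqb (Gs m us) 0) * W p m us) (lists_of k L)) =
  (Rsum (map (fun x => ind (Nat.eqb (gen m x) 0) * gw_prob p m x) L)) ^ k.
Proof. rewrite <- sum_lists_prod. apply Rsum_map_ext. intros. apply Z_prod. Qed.

Lemma ind_split u v a : (1 <= a)%nat ->
  ind (Nat.eqb u a) * ind (Nat.eqb v 0) + ind (Nat.eqb u 0) * ind (Nat.eqb v a) <= ind (Nat.eqb (u + v) a).
Proof.
  intros Ha. destruct (Nat.eqb_spec u a), (Nat.eqb_spec v 0), (Nat.eqb_spec u 0), (Nat.eqb_spec v a),
    (Nat.eqb_spec (u+v) a); simpl; try lra; lia.
Qed.

Lemma FL_step p (Hp : forall n, 0 <= p n) m L a (Ha : (1 <= a)%nat) k :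
  Rsum (map (fun x => ind (Nat.eqb (gen m x) a) * gw_prob p m x) L) *
  (Rsum (map (fun x => ind (Nat.eqb (gen m x) 0) * gw_prob p m x) L)) ^ k +
  Rsum (map (fun x => ind (Nat.eqb (gen m x) 0) * gw_prob p m x) L) *
  Rsum (map (fun us => ind (Nat.eqb (Gs m us) a) * W p m us) (lists_of k L))
  <= Rsum (map (fun us => ind (Nat.eqb (Gs m us) a) * W p m us) (lists_of (S k) L)).
Proof.
  rewrite sum_lists_S, <- Z_pow, <- !Rsum_map_scal_r, <- Rsum_map_plus.
  apply Rsum_map_le. intros x _.
  rewrite <- !Rsum_map_scal, <- Rsum_map_plus.
  apply Rsum_map_le. intros us _.
  change (Gs m (x :: us)) with (gen m x + Gs m us)%nat. rewrite W_cons.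
  pose proof (ind_split (gen m x) (Gs m us) a Ha).
  pose proof (gw_nonneg p Hp m x). pose proof (W_nonneg p Hp m us).
  assert (0 <= gw_prob p m x * W p m us) by (apply Rmult_le_pos; auto).
  apply Rle_trans with ((ind (gen m x =? a) * ind (Gs m us =? 0) + ind (gen m x =? 0) * ind (Gs m us =? a))
                         * (gw_prob p m x * W p m us)).
  - right. ring.
  - apply Rle_trans with (ind (gen m x + Gs m us =? a) * (gw_prob p m x * W p m us)).
    + apply Rmult_le_compat_r; auto.
    + right. ring.
Qed.

Lemma FL p (Hp : forall n, 0 <= p n) m L a (Ha : (1 <= a)%nat) : forall k,
  INR (S k) * Rsum (map (fun x => ind (Nat.eqb (gen m x) a) * gw_prob p m x) L) *
  (Rsum (map (fun x => ind (Nat.eqb (gen m x) 0) * gw_prob p m x) L)) ^ k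
  <= Rsum (map (fun us => ind (Nat.eqb (Gs m us) a) * W p m us) (lists_of (S k) L)).
Proof.
  assert (HZ : 0 <= Rsum (map (fun x => ind (Nat.eqb (gen m x) 0) * gw_prob p m x) L))
    by (apply Rsum_map_ge0; intros; apply Rmult_le_pos; [apply ind_ge0|apply gw_nonneg; auto]).
  intros k. induction k.
  - pose proof (FL_step p Hp m L a Ha 0%nat) as H.
    assert (HF0 : Rsum (map (fun us => ind (Nat.eqb (Gs m us) a) * W p m us) (lists_of 0 L)) = 0).
    { simpl. destruct a; [lia|]. simpl. lra. }
    rewrite HF0 in H. simpl in *. lra.
  - pose proof (FL_step p Hp m L a Ha (S k)) as H.
    revert H IHk HZ.
    generalize (Rsum (map (fun x => ind (Nat.eqb (gen m x) a) * gw_prob p m x) L)).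
    generalize (Rsum (map (fun x => ind (Nat.eqb (gen m x) 0) * gw_prob p m x) L)).
    generalize (Rsum (map (fun us => ind (Nat.eqb (Gs m us) a) * W p m us) (lists_of (S k) L))).
    generalize (Rsum (map (fun us => ind (Nat.eqb (Gs m us) a) * W p m us) (lists_of (S (S k)) L))).
    intros F2 F1 Z A H IH HZ.
    rewrite S_INR. simpl pow in *.
    assert (Z * (INR (S k) * A * Z ^ k) <= Z * F1) by (apply Rmult_le_compat_l; auto).
    nra.
Qed.

Lemma cv_le_ev u v l l' : Un_cv u l -> Un_cv v l' ->
  (exists N, forall n, (N <= n)%nat -> u n <= v n) -> l <= l'.
Proof.
  intros Hu Hv [N HN]. destruct (Rle_dec l l') as [|Hlt]; auto. exfalso.
  assert (He : 0 < (l - l') / 2) by lra.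
  destruct (Hu _ He) as [N1 H1]. destruct (Hv _ He) as [N2 H2].
  set (n := max N (max N1 N2)).
  specialize (H1 n ltac:(unfold n; lia)). specialize (H2 n ltac:(unfold n; lia)). specialize (HN n ltac:(unfold n; lia)).
  unfold R_dist in *. apply Rabs_def2 in H1. apply Rabs_def2 in H2. lra.
Qed.

Lemma cv_Rsum {A} (f : nat -> A -> R) g l :
  (forall x, In x l -> Un_cv (fun M => f M x) (g x)) ->
  Un_cv (fun M => Rsum (map (f M) l)) (Rsum (map g l)).
Proof.
  induction l; intros H; simpl.
  - apply cv_const.
  - apply CV_plus. apply H; simpl; auto. apply IHl. intros; apply H; simpl; auto.
Qed.

Lemma cv_pow u l k : Un_cv u l -> Un_cv (fun n => u n ^ k) (l ^ k).
Proof.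
  intros H. induction k; simpl.
  - apply cv_const.
  - apply CV_mult; auto.
Qed.

Lemma cv_ev_eq u v l : (exists N, forall n, (N <= n)%nat -> u n = v n) -> Un_cv v l -> Un_cv u l.
Proof.
  intros [N HN] Hv e He. destruct (Hv e He) as [N1 H1]. exists (max N N1). intros n Hn.
  rewrite HN by lia. apply H1. lia.
Qed.

Lemma cv_shift u l h : Un_cv u l -> Un_cv (fun n => u (n - h)%nat) l.
Proof.
  intros H e He. destruct (H e He) as [N HN]. exists (N + h)%nat. intros n Hn. apply HN. lia.
Qed.

Lemma cv_scal c u l : Un_cv u l -> Un_cv (fun n => c * u n) (c * l).
Proof. intros H. apply CV_mult; auto. apply cv_const. Qed.

Lemma P_gen_cv p (Hp : forall n, 0 <= p n) (Hs : infinite_sum p 1) m a :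
  Un_cv (fun M => Rsum (map (fun s => ind (Nat.eqb (gen m s) a) * gw_prob p m s) (trees_bd m M))) (P_gen p m a).
Proof.
  eapply cv_ev_eq; [|apply (gw_event_cv p Hp Hs m (fun s => Nat.eqb (gen m s) a))].
  exists 0%nat. intros. rewrite Rsum_filter. auto.
Qed.

Lemma Q_S p m M :
  Rsum (map (fun s => ind (Nat.eqb (gen (S m) s) 0) * gw_prob p (S m) s) (trees_bd (S m) M)) =
  Rsum (map (fun k => p k * (Rsum (map (fun s => ind (Nat.eqb (gen m s) 0) * gw_prob p m s) (trees_bd m M))) ^ k)
    (seq 0 (S M))).
Proof.
  rewrite sum_E_S. apply Rsum_map_ext. intros k _.
  rewrite (Rsum_map_ext (fun ls => ind (Nat.eqb (gen (S m) (Node ls)) 0) * gw_prob p (S m) (Node ls))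
     (fun ls => p (length ls) * (ind (Nat.eqb (Gs m ls) 0) * W p m ls))).
  - rewrite (sum_lists_len k _ (fun j ls => p j * (ind (Nat.eqb (Gs m ls) 0) * W p m ls))).
    rewrite Rsum_map_scal, Z_pow. auto.
  - intros ls _. change (gen (S m) (Node ls)) with (Gs m ls).
    change (gw_prob p (S m) (Node ls)) with (p (length ls) * W p m ls). ring.
Qed.

Lemma q_rec p (Hp : forall n, 0 <= p n) (Hs : infinite_sum p 1) m K :
  Rsum (map (fun k => p k * (P_gen p m 0) ^ k) (seq 0 (S K))) <= P_gen p (S m) 0.
Proof.
  set (Q := fun M => Rsum (map (fun s => ind (Nat.eqb (gen m s) 0) * gw_prob p m s) (trees_bd m M))).
  apply (cv_le_ev (fun M => Rsum (map (fun k => p k * Q M ^ k) (seq 0 (S K))))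
                  (fun M => Rsum (map (fun s => ind (Nat.eqb (gen (S m) s) 0) * gw_prob p (S m) s) (trees_bd (S m) M)))).
  - apply (cv_Rsum (fun M k => p k * Q M ^ k)). intros k _. apply cv_scal. apply cv_pow.
    apply P_gen_cv; auto.
  - apply P_gen_cv; auto.
  - exists K. intros M HM. rewrite Q_S. fold (Q M). apply Rsum_seq_mono; auto.
    intros k. apply Rmult_le_pos; auto. apply pow_le. unfold Q. apply Rsum_map_ge0.
    intros; apply Rmult_le_pos; [apply ind_ge0|apply gw_nonneg; auto].
Qed.

Lemma pow_phi x k : 0 <= x <= 1 -> (2 <= k)%nat -> 1 + INR k * (x - 1) + (1 - x) * (1 - x) <= x ^ k.
Proof.
  intros Hx Hk. induction Hk.
  - simpl. lra.
  - rewrite S_INR. simpl pow. pose proof (pow_le1 x m Hx). pose proof (pos_INR m).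
    assert (x * (1 + INR m * (x - 1) + (1 - x) * (1 - x)) <= x * x ^ m) by (apply Rmult_le_compat_l; lra).
    assert (H2 : 2 <= INR m) by (apply (le_INR 2); auto).
    assert (0 <= ((1 - x) * (1 - x)) * (INR m - (1 - x))) by (apply Rmult_le_pos; nra).
    nra.
Qed.

Lemma exists_k0 p (Hp : forall n, 0 <= p n) (Hs : infinite_sum p 1) (H01 : p 0%nat + p 1%nat < 1) :
  exists k0, (2 <= k0)%nat /\ 0 < p k0.
Proof.
  destruct (classic (exists k0, (2 <= k0)%nat /\ 0 < p k0)) as [|Hn]; auto. exfalso.
  assert (Hz : forall k, (2 <= k)%nat -> p k = 0).
  { intros k Hk. destruct (Rle_lt_dec (p k) 0). specialize (Hp k). lra. exfalso. apply Hn. eauto. }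
  destruct (psum_ev p Hs ((1 - (p 0%nat + p 1%nat)) / 2)) as [K HK]; [lra|].
  specialize (HK (S K) ltac:(lia)).
  replace (S (S K)) with (2 + K)%nat in HK by lia. rewrite seq_app, map_app, Rsum_app in HK.
  rewrite (Rsum_map_0 p (seq (0 + 2) K)) in HK. simpl in HK. lra.
  intros x Hx. apply in_seq in Hx. apply Hz. lia.
Qed.

Lemma q_bounds p (Hp : forall n, 0 <= p n) (Hs : infinite_sum p 1) m a : 0 <= P_gen p m a <= 1.
Proof. apply gw_event_bounds; auto. Qed.

Lemma q_inc p (Hp : forall n, 0 <= p n) (Hs : infinite_sum p 1)
  (Hc : infinite_sum (fun n => INR n * p n) 1) k0 (Hk0 : (2 <= k0)%nat) m :
  P_gen p m 0 + p k0 * ((1 - P_gen p m 0) * (1 - P_gen p m 0)) <= P_gen p (S m) 0.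
Proof.
  set (x := P_gen p m 0). pose proof (q_bounds p Hp Hs m 0) as Hx. fold x in Hx.
  apply Rnot_lt_le. intros Hlt.
  set (e := x + p k0 * ((1 - x) * (1 - x)) - P_gen p (S m) 0).
  destruct (psum_ev p Hs (e/2) ltac:(unfold e; lra)) as [K HK].
  set (K' := max K k0). specialize (HK K' ltac:(unfold K'; lia)).
  pose proof (q_rec p Hp Hs m K') as Hr. fold x in Hr.
  assert (Hg : Rsum (map (fun k => p k * (1 + INR k * (x - 1)) + ind (Nat.eqb k k0) * (p k * ((1 - x) * (1 - x))))
                 (seq 0 (S K'))) <= Rsum (map (fun k => p k * x ^ k) (seq 0 (S K')))).
  { apply Rsum_map_le. intros k _. pose proof (Hp k). destruct (Nat.eqb_spec k k0).
    - subst. simpl ind. pose proof (pow_phi x k0 Hx Hk0). nra.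
    - simpl ind. pose proof (bern x k ltac:(lra)). nra. }
  rewrite Rsum_map_plus in Hg.
  rewrite (Rsum_seq_single (fun k => ind (Nat.eqb k k0) * (p k * ((1 - x) * (1 - x)))) (S K') k0) in Hg;
    [|unfold K'; lia|].
  2:{ intros j Hj. cbv beta. rewrite (proj2 (Nat.eqb_neq j k0) Hj). simpl. ring. }
  rewrite Nat.eqb_refl in Hg. simpl ind in Hg.
  rewrite (Rsum_map_ext _ (fun k => p k + (x - 1) * (INR k * p k))) in Hg by (intros; ring).
  rewrite Rsum_map_plus, Rsum_map_scal in Hg.
  pose proof (psum_le1 _ (fun n => Rmult_le_pos _ _ (pos_INR n) (Hp n)) Hc K') as Hm.
  assert (0 <= Rsum (map (fun k => INR k * p k) (seq 0 (S K')))).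
  { apply Rsum_map_ge0. intros. apply Rmult_le_pos; auto. apply pos_INR. }
  assert (0 <= (x - 1) * (Rsum (map (fun k => INR k * p k) (seq 0 (S K'))) - 1)) by nra.
  unfold e in HK. lra.
Qed.

Lemma q_cv p (Hp : forall n, 0 <= p n) (Hs : infinite_sum p 1)
  (Hc : infinite_sum (fun n => INR n * p n) 1) (H01 : p 0%nat + p 1%nat < 1) :
  Un_cv (fun m => P_gen p m 0) 1.
Proof.
  destruct (exists_k0 p Hp Hs H01) as [k0 [Hk0 Hpk0]].
  pose proof (q_inc p Hp Hs Hc k0 Hk0) as Hinc.
  assert (Hmono : forall m m', (m <= m')%nat -> P_gen p m 0 <= P_gen p m' 0).
  { intros m m' H. induction H. lra. specialize (Hinc m0).
    assert (0 <= p k0 * ((1 - P_gen p m0 0) * (1 - P_gen p m0 0))).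
    { apply Rmult_le_pos; [lra|]. pose proof (Rle_0_sqr (1 - P_gen p m0 0)). unfold Rsqr in *. lra. }
    lra. }
  intros e He.
  assert (Hex : exists m0, 1 - e < P_gen p m0 0).
  { apply NNPP. intros Hn.
    assert (Hall : forall m, P_gen p m 0 <= 1 - e) by (intros m; apply Rnot_lt_le; intros H; apply Hn; eauto).
    set (e' := Rmin e 1).
    assert (He' : 0 < e' <= e) by (unfold e'; split; [apply Rmin_glb_lt; lra|apply Rmin_l]).
    assert (Hgrow : forall m, INR m * (p k0 * (e' * e')) <= P_gen p m 0).
    { induction m.
      - simpl. rewrite Rmult_0_l. apply q_bounds; auto.
      - specialize (Hinc m). specialize (Hall m). rewrite S_INR.
        assert (e' * e' <= (1 - P_gen p m 0) * (1 - P_gen p m 0)).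
        { apply Rmult_le_compat; lra. }
        assert (p k0 * (e' * e') <= p k0 * ((1 - P_gen p m 0) * (1 - P_gen p m 0))) by (apply Rmult_le_compat_l; lra).
        lra. }
    assert (Hpos : 0 < p k0 * (e' * e')) by (apply Rmult_lt_0_compat; [lra|nra]).
    destruct (INR_archimed (p k0 * (e' * e')) 2 ltac:(lra)) as [N HN].
    specialize (Hgrow N). pose proof (q_bounds p Hp Hs N 0).
    lra. }
  destruct Hex as [m0 Hm0]. exists m0. intros m Hm. unfold R_dist.
  pose proof (Hmono m0 m Hm). pose proof (q_bounds p Hp Hs m 0).
  rewrite Rabs_left1; lra.
Qed.

Lemma Rprod_nonzero {A} (f : A -> R) l : Rprod (map f l) <> 0 -> forall x, In x l -> f x <> 0.
Proof.
  induction l; simpl; intros H x Hx; [contradiction|].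
  destruct Hx as [<-|Hx].
  - intros E. apply H. rewrite E. ring.
  - apply IHl; auto. intros E. apply H. rewrite E. ring.
Qed.

Lemma uniform_M h l : (forall x, In x l -> exists M, In x (trees_bd h M)) ->
  exists M, forall x, In x l -> In x (trees_bd h M).
Proof.
  induction l; intros H. exists 0%nat. intros _ [].
  destruct (H a) as [M1 H1]; [simpl; auto|].
  destruct IHl as [M2 H2]; [intros; apply H; simpl; auto|].
  exists (max M1 M2). intros x [<-|Hx].
  - eapply In_E_mono; eauto. lia.
  - eapply In_E_mono; eauto. lia.
Qed.

Lemma gw_support p : forall h t, gw_prob p h t <> 0 -> exists M, In t (trees_bd h M).
Proof.
  induction h; intros [l] H.
  - destruct l; simpl in H; [|lra]. exists 0%nat. simpl. auto.
  - simpl in H. assert (Hpr : Rprod (map (gw_prob p h) l) <> 0) by (intros E; apply H; rewrite E; ring).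
    destruct (uniform_M h l) as [M HM].
    { intros x Hx. apply IHh. apply (Rprod_nonzero _ l Hpr x Hx). }
    exists (max M (length l)). apply In_E_S. exists l. split; auto. split; [lia|].
    intros x Hx. eapply In_E_mono; [apply HM; auto|lia].
Qed.

Lemma P_joint_cv p (Hp : forall n, 0 <= p n) (Hs : infinite_sum p 1) n a h t : (h <= n)%nat ->
  Un_cv (fun M => Rsum (map (fun s => ind (tree_eqb (restr h s) t) * ind (Nat.eqb (gen n s) a) * gw_prob p n s)
                      (trees_bd n M))) (P_joint p n a h t).
Proof.
  intros Hhn. unfold P_joint. rewrite Nat.max_l by auto.
  eapply cv_ev_eq; [|apply gw_event_cv; auto].
  exists 0%nat. intros. rewrite Rsum_filter. apply Rsum_map_ext. intros. rewrite ind_and. auto.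
Qed.

Lemma P_joint_nonneg p (Hp : forall n, 0 <= p n) (Hs : infinite_sum p 1) n a h t : 0 <= P_joint p n a h t.
Proof. apply gw_event_bounds; auto. Qed.

Lemma P_joint_zero p (Hp : forall n, 0 <= p n) (Hs : infinite_sum p 1) n a h t :
  ~ (exists M, In t (trees_bd h M)) -> P_joint p n a h t = 0.
Proof.
  intros Hn. unfold P_joint. eapply UL_sequence; [apply gw_event_cv; auto|].
  eapply cv_ev_eq; [|apply cv_const]. exists 0%nat. intros M _.
  rewrite Rsum_filter. apply Rsum_map_0. intros s Hs'.
  destruct (tree_eqb (restr h s) t) eqn:E; [|simpl; ring].
  exfalso. apply tree_eqb_sound in E. apply Hn. exists M. rewrite <- E. eapply restr_in; eauto.
Qed.

Lemma LB_ineq p (Hp : forall n, 0 <= p n) (Hs : infinite_sum p 1) n a h t k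
  (Ha : (1 <= a)%nat) (Hhn : (h <= n)%nat) (Hk : gen h t = S k) (HM : exists M, In t (trees_bd h M)) :
  gw_prob p h t * INR (S k) * P_gen p (n - h) a * (P_gen p (n - h) 0) ^ k <= P_joint p n a h t.
Proof.
  destruct HM as [M0 HM0].
  eapply cv_le_ev; [|apply P_joint_cv; auto|].
  - apply (CV_mult (fun M => gw_prob p h t * INR (S k) *
       Rsum (map (fun x => ind (Nat.eqb (gen (n - h) x) a) * gw_prob p (n - h) x) (trees_bd (n - h) M)))).
    + apply CV_mult. apply cv_const. apply P_gen_cv; auto.
    + apply cv_pow. apply P_gen_cv; auto.
  - exists M0. intros M HM. cbv beta.
    assert (HtM : In t (trees_bd h M)) by (eapply In_E_mono; eauto).
    pose proof (graft p h n M [t] (fun x => ind (Nat.eqb x a)) Hhn) as G.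
    change (length [t]) with 1%nat in G. rewrite sum_lists_S in G.
    rewrite (Rsum_map_ext (fun x => Rsum (map (fun l => ind (mtch h (x :: l) [t]) * ind (Gs n (x :: l) =? a) * W p n (x :: l))
                                   (lists_of 0 (trees_bd n M))))
                          (fun s => ind (tree_eqb (restr h s) t) * ind (Nat.eqb (gen n s) a) * gw_prob p n s)) in G.
    2:{ intros x _. simpl. unfold W, Gs. simpl. rewrite andb_true_r, Nat.add_0_r. ring. }
    rewrite G by (intros t' [<-|[]]; auto).
    assert (HG : Gs h [t] = S k) by (unfold Gs; simpl; lia). rewrite HG.
    assert (HW : W p h [t] = gw_prob p h t) by (unfold W; simpl; ring). rewrite HW.
    eapply Rle_trans; [right|apply Rmult_le_compat_l; [apply gw_nonneg; auto|apply FL; auto]].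
    match goal with |- context [?z ^ k] => set (Zk := z ^ k) end. ring.
Qed.

Lemma upper_sum p (Hp : forall n, 0 <= p n) (Hs : infinite_sum p 1) n a h M : (h <= n)%nat ->
  Rsum (map (fun t => P_joint p n a h t) (trees_bd h M)) <= P_gen p n a.
Proof.
  intros Hhn. eapply cv_le_ev.
  - apply (cv_Rsum (fun M' t => Rsum (map (fun s => ind (tree_eqb (restr h s) t) * ind (Nat.eqb (gen n s) a) * gw_prob p n s)
                      (trees_bd n M')))). intros. apply P_joint_cv; auto.
  - apply P_gen_cv; auto.
  - exists 0%nat. intros M' _. rewrite Rsum_swap. apply Rsum_map_le. intros s _.
    rewrite (Rsum_map_ext _ (fun t => ind (tree_eqb (restr h s) t) * (ind (Nat.eqb (gen n s) a) * gw_prob p n s)))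
      by (intros; ring).
    rewrite Rsum_map_scal_r. pose proof (count_E h M (restr h s)).
    assert (0 <= ind (Nat.eqb (gen n s) a) * gw_prob p n s) by (apply Rmult_le_pos; [apply ind_ge0|apply gw_nonneg; auto]).
    nra.
Qed.

Lemma ratio_cv p (alpha : nat -> nat) N0 (HN0 : forall n, (N0 <= n)%nat -> 0 < P_gen p n (alpha n))
  (ratio : forall j, (0 < j)%nat -> Un_cv (fun n => P_gen p (n - j) (alpha n) / P_gen p n (alpha n)) 1) h :
  Un_cv (fun n => P_gen p (n - h) (alpha n) / P_gen p n (alpha n)) 1.
Proof.
  destruct h. 
  - eapply cv_ev_eq; [|apply cv_const]. exists N0. intros n Hn. rewrite Nat.sub_0_r.
    specialize (HN0 n Hn). field. lra.
  - apply ratio. lia.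
Qed.

Lemma LBeps p (Hp : forall n, 0 <= p n) (Hs : infinite_sum p 1) (H01 : p 0%nat + p 1%nat < 1)
  (Hc : infinite_sum (fun n => INR n * p n) 1) (alpha : nat -> nat) (Hapos : forall n, (0 < alpha n)%nat)
  N0 (HN0 : forall n, (N0 <= n)%nat -> 0 < P_gen p n (alpha n))
  (ratio : forall j, (0 < j)%nat -> Un_cv (fun n => P_gen p (n - j) (alpha n) / P_gen p n (alpha n)) 1) h t :
  forall e, 0 < e -> exists N, forall n, (N <= n)%nat ->
    kesten_prob p 1 h t - e <= P_joint p n (alpha n) h t / P_gen p n (alpha n).
Proof.
  intros e He. rewrite kesten_gw.
  assert (Hnn : forall n, (N0 <= n)%nat -> 0 <= P_joint p n (alpha n) h t / P_gen p n (alpha n)).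
  { intros n Hn. unfold Rdiv. apply Rmult_le_pos. apply P_joint_nonneg; auto.
    left. apply Rinv_0_lt_compat. auto. }
  destruct (Req_dec (gw_prob p h t) 0) as [Hz|Hnz].
  { exists N0. intros n Hn. rewrite Hz. specialize (Hnn n Hn). lra. }
  destruct (gen h t) as [|k] eqn:Hk.
  { exists N0. intros n Hn. specialize (Hnn n Hn). simpl INR. lra. }
  pose proof (gw_support p h t Hnz) as HM.
  assert (Hl : Un_cv (fun n => gw_prob p h t * INR (S k) * (P_gen p (n - h) (alpha n) / P_gen p n (alpha n)) *
                              (P_gen p (n - h) 0) ^ k) (gw_prob p h t * INR (S k) * 1 * 1 ^ k)).
  { apply CV_mult. apply CV_mult. apply cv_const. eapply ratio_cv; eauto.
    apply cv_pow. apply (cv_shift (fun m => P_gen p m 0)). apply q_cv; auto. }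
  destruct (Hl e He) as [N1 HN1].
  exists (max N0 (max N1 h)). intros n Hn.
  specialize (HN1 n ltac:(lia)). unfold R_dist in HN1. apply Rabs_def2 in HN1.
  rewrite pow1, Rmult_1_r in HN1.
  pose proof (HN0 n ltac:(lia)) as HP.
  pose proof (LB_ineq p Hp Hs n (alpha n) h t k ltac:(specialize (Hapos n); lia) ltac:(lia) Hk HM) as HL.
  assert (gw_prob p h t * INR (S k) * (P_gen p (n - h) (alpha n) / P_gen p n (alpha n)) * P_gen p (n - h) 0 ^ k
          <= P_joint p n (alpha n) h t / P_gen p n (alpha n)).
  { apply Rle_trans with ((gw_prob p h t * INR (S k) * P_gen p (n - h) (alpha n) * P_gen p (n - h) 0 ^ k)
                           / P_gen p n (alpha n)).
    - right. field. lra.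
    - unfold Rdiv. apply Rmult_le_compat_r; auto. left. apply Rinv_0_lt_compat; auto. }
  lra.
Qed.

Lemma LBeps_list p (Hp : forall n, 0 <= p n) (Hs : infinite_sum p 1) (H01 : p 0%nat + p 1%nat < 1)
  (Hc : infinite_sum (fun n => INR n * p n) 1) (alpha : nat -> nat) (Hapos : forall n, (0 < alpha n)%nat)
  N0 (HN0 : forall n, (N0 <= n)%nat -> 0 < P_gen p n (alpha n))
  (ratio : forall j, (0 < j)%nat -> Un_cv (fun n => P_gen p (n - j) (alpha n) / P_gen p n (alpha n)) 1) h L :
  forall e, 0 < e -> exists N, forall n, (N <= n)%nat -> forall t, In t L ->
    kesten_prob p 1 h t - e <= P_joint p n (alpha n) h t / P_gen p n (alpha n).
Proof.
  intros e He. induction L.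
  - exists 0%nat. intros _ _ _ [].
  - destruct IHL as [N1 H1]. destruct (LBeps p Hp Hs H01 Hc alpha Hapos N0 HN0 ratio h a e He) as [N2 H2].
    exists (max N1 N2). intros n Hn t [<-|Ht].
    + apply H2. lia.
    + apply H1; auto. lia.
Qed.

Theorem proposition6p1
  (p : nat -> R)
  (p_nonneg : forall n, 0 <= p n)
  (p_prob : infinite_sum p 1)
  (p0_pos : 0 < p 0%nat)
  (p01 : p 0%nat + p 1%nat < 1)
  (critical : infinite_sum (fun n => INR n * p n) 1)
  (alpha : nat -> nat)
  (alpha_pos : forall n, (0 < alpha n)%nat)
  (cond_def : exists N, forall n, (N <= n)%nat -> 0 < P_gen p n (alpha n))
  (ratio : forall j, (0 < j)%nat ->
     Un_cv (fun n => P_gen p (n - j) (alpha n) / P_gen p n (alpha n)) 1) :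
  forall (h : nat) (t : tree),
    Un_cv (fun n => P_joint p n (alpha n) h t / P_gen p n (alpha n))
          (kesten_prob p 1 h t).
Proof.
  intros h t. destruct cond_def as [N0 HN0].
  destruct (classic (exists M, In t (trees_bd h M))) as [HM|HnM].
  2:{ assert (Hgw : gw_prob p h t = 0).
      { destruct (Req_dec (gw_prob p h t) 0); auto. exfalso. apply HnM. apply gw_support with p. auto. }
      rewrite kesten_gw, Hgw, Rmult_0_r.
      eapply cv_ev_eq; [|apply cv_const]. exists 0%nat. intros n _.
      rewrite P_joint_zero; auto. unfold Rdiv. ring. }
  destruct HM as [M0 HM0].
  intros e He.
  destruct (mm_ev p p_nonneg p_prob critical h (e/4) ltac:(lra)) as [Nm HNm].
  set (M := max M0 Nm). specialize (HNm M ltac:(unfold M; lia)).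
  set (L := trees_bd h M).
  assert (HtL : In t L) by (unfold L; eapply In_E_mono; eauto; unfold M; lia).
  assert (HsumK : Rsum (map (kesten_prob p 1 h) L) = mm p h M).
  { unfold mm, L. apply Rsum_map_ext. intros. apply kesten_gw. }
  set (c := INR (length L) + 1).
  assert (Hc : 0 < c) by (unfold c; pose proof (pos_INR (length L)); lra).
  set (e' := e / (4 * c)).
  assert (He' : 0 < e') by (unfold e'; apply Rdiv_lt_0_compat; lra).
  assert (HLe' : INR (length L) * e' <= e / 4).
  { apply Rle_trans with (e' * c).
    - assert (INR (length L) <= c) by (unfold c; lra). nra.
    - unfold e'. right. field. lra. }
  destruct (LBeps_list p p_nonneg p_prob p01 critical alpha alpha_pos N0 HN0 ratio h L e' He') as [N1 HN1].
  exists (max (max N0 N1) h). intros n Hn. unfold R_dist.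
  pose proof (HN0 n ltac:(lia)) as HP.
  specialize (HN1 n ltac:(lia)).
  set (R := fun t' => P_joint p n (alpha n) h t' / P_gen p n (alpha n)).
  assert (HsumR : Rsum (map R L) <= 1).
  { unfold R, Rdiv. rewrite Rsum_map_scal_r.
    pose proof (upper_sum p p_nonneg p_prob n (alpha n) h M ltac:(lia)) as U. fold L in U.
    apply Rle_trans with (P_gen p n (alpha n) * / P_gen p n (alpha n)).
    - apply Rmult_le_compat_r; auto. left. apply Rinv_0_lt_compat; auto.
    - rewrite Rinv_r; lra. }
  assert (Hd : R t - kesten_prob p 1 h t + e' <=
               Rsum (map (fun t' => R t' - kesten_prob p 1 h t' + e') L)).
  { apply (Rsum_ge_term (fun t' => R t' - kesten_prob p 1 h t' + e')); auto.
    intros y Hy. specialize (HN1 y Hy). fold (R y) in HN1. lra. }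
  rewrite (Rsum_map_ext _ (fun t' => R t' + (-1) * kesten_prob p 1 h t' + e')) in Hd by (intros; ring).
  rewrite !Rsum_map_plus, Rsum_map_scal, Rsum_const_len, HsumK in Hd.
  specialize (HN1 t HtL). fold (R t) in HN1.
  assert (He4 : e' <= e / 4).
  { apply Rle_trans with (e' * c). assert (1 <= c) by (unfold c; pose proof (pos_INR (length L)); lra). nra.
    unfold e'. right. field. lra. }
  change (Rabs (R t - kesten_prob p 1 h t) < e).
  apply Rabs_def1; lra.
Qed.
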